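(* Let $n,k\in\mathbb{N}$ with $n\le k$, and let $a_1,\ldots,a_n\ge 0$ be real numbers such that $r:=\sum_{j=1}^n a_j>0$. Consider the (possibly degenerate) ellipsoid $$\mathcal{E}=\Big\{x=(x_1,\ldots,x_n)^t\in\mathbb{R}^n \;\Big|\; \sum_{j=1}^n a_j x_j^2=1\Big\}.$$ Then there is a tight frame for $\mathbb{R}^n$ consisting of $k$ vectors $u_1,\ldots,u_k\in\mathcal{E}$.
   Context: A finite sequence $\{u_j\}$ in a Hilbert space $\mathcal{H}$ is a frame if there are constants $0<A\le B$ with $A\|x\|^2\le\sum_j|\langle x,u_j\rangle|^2\le B\|x\|^2$ for all $x\in\mathcal{H}$; it is a tight frame if one can take $A=B$ (the common value is the frame bound). *)

(* Defs.v *)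
From HB Require Import structures.
From mathcomp Require Import all_boot all_order all_algebra.
From mathcomp Require Import reals.
Set Implicit Arguments. Unset Strict Implicit. Unset Printing Implicit Defensive.
Import Order.TTheory GRing.Theory Num.Theory.
Local Open Scope ring_scope.

Definition dotv (R : realType) (n : nat) (x y : 'rV[R]_n) : R :=
  \sum_(i < n) x 0 i * y 0 i.

Definition is_frame_with (R : realType) (n k : nat) (u : 'I_k -> 'rV[R]_n) (A B : R) : Prop :=
  0 < A /\ A <= B /\
  forall x : 'rV[R]_n,
    A * dotv x x <= \sum_(j < k) `|dotv x (u j)| ^+ 2 /\
    \sum_(j < k) `|dotv x (u j)| ^+ 2 <= B * dotv x x.

Definition tight_frame (R : realType) (n k : nat) (u : 'I_k -> 'rV[R]_n) : Prop :=
  exists A : R, is_frame_with u A A.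

Definition ellipsoid (R : realType) (n : nat) (a : 'I_n -> R) (x : 'rV[R]_n) : Prop :=
  \sum_(j < n) a j * x 0 j ^+ 2 = 1.

(* Main.v *)
Require Import Defs.
From HB Require Import structures.
From mathcomp Require Import all_boot all_order all_algebra.
From mathcomp Require Import reals.
From mathcomp Require Import ring lra.
Import Order.TTheory GRing.Theory Num.Theory.
Local Open Scope ring_scope.

Set Implicit Arguments.
Section Aux.
Variable R : realType.

Lemma rot_scalar (x y z m : R) : (x - m) * (z - m) < 0 ->
  exists c s : R, c ^+ 2 + s ^+ 2 = 1 /\ c ^+ 2 * x + 2 * c * s * y + s ^+ 2 * z = m.
Proof.
move=> h.
set d := y ^+ 2 - (x - m) * (z - m).
have hd : 0 <= d by rewrite /d; nra.
set c0 := - y + Num.sqrt d.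
set s0 := x - m.
have hs0 : s0 != 0 by apply/eqP => e; move: h; rewrite -/s0 e mul0r ltxx.
have hN : 0 < c0 ^+ 2 + s0 ^+ 2.
  have : 0 < s0 ^+ 2 by rewrite lt_def sqrf_eq0 hs0 sqr_ge0.
  have : 0 <= c0 ^+ 2 by rewrite sqr_ge0.
  lra.
have key : (x - m) * c0 ^+ 2 + 2 * y * c0 * s0 + (z - m) * s0 ^+ 2 = 0.
  rewrite /c0 /s0.
  have e : Num.sqrt d ^+ 2 = d by rewrite sqr_sqrtr.
  rewrite -[x - m]/s0.
  have -> : s0 * (- y + Num.sqrt d) ^+ 2 + 2 * y * (- y + Num.sqrt d) * s0 +
    (z - m) * s0 ^+ 2 = s0 * (Num.sqrt d ^+ 2 - y ^+ 2 + (z - m) * s0) by ring.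
  by rewrite e /d /s0; ring.
set N := c0 ^+ 2 + s0 ^+ 2.
have hN0 : N != 0 by rewrite gt_eqF.
have eN : Num.sqrt N ^+ 2 = N by rewrite sqr_sqrtr // ltW.
have sN0 : Num.sqrt N != 0 by rewrite sqrtr_eq0 -ltNge.
exists (c0 / Num.sqrt N), (s0 / Num.sqrt N); split.
  by rewrite !expr_div_n eN -mulrDl divff.
apply: (@mulfI _ N) => //.
have -> : N * ((c0 / Num.sqrt N) ^+ 2 * x + 2 * (c0 / Num.sqrt N) * (s0 / Num.sqrt N) * y +
  (s0 / Num.sqrt N) ^+ 2 * z) = (N / Num.sqrt N ^+ 2) * (c0 ^+ 2 * x + 2 * c0 * s0 * y + s0 ^+ 2 * z).
  by field.
rewrite eN divff //.
apply/eqP; rewrite -subr_eq0 -[X in _ == X]key; apply/eqP; rewrite /N; ring.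
Qed.
Variables (n k : nat) (a : 'I_n -> R).

Definition Qf (u v : 'rV[R]_n) := \sum_(l < n) a l * (u 0 l * v 0 l).
Definition frameA (u : 'I_k -> 'rV[R]_n) (A : R) :=
  forall x, \sum_(j < k) dotv x (u j) ^+ 2 = A * dotv x x.
Definition rot (u : 'I_k -> 'rV[R]_n) i j (c s : R) := fun l =>
  if l == i then c *: u i + s *: u j else if l == j then (- s) *: u i + c *: u j else u l.

Lemma dotv_lin x c d (u v : 'rV[R]_n) :
  dotv x (c *: u + d *: v) = c * dotv x u + d * dotv x v.
Proof.
rewrite /dotv !mulr_sumr -big_split; apply: eq_bigr => l _; rewrite !mxE /=; ring.
Qed.

Lemma Q_quad c d (u v : 'rV[R]_n) :
  Qf (c *: u + d *: v) (c *: u + d *: v) =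
  c ^+ 2 * Qf u u + 2 * c * d * Qf u v + d ^+ 2 * Qf v v.
Proof.
rewrite /Qf !mulr_sumr -!big_split; apply: eq_bigr => l _; rewrite !mxE /=; ring.
Qed.

Lemma Q_quad2 c d (u v : 'rV[R]_n) :
  Qf (c *: u + d *: v) (c *: u + d *: v) + Qf (- d *: u + c *: v) (- d *: u + c *: v)
  = (c ^+ 2 + d ^+ 2) * (Qf u u + Qf v v).
Proof. rewrite !Q_quad; ring. Qed.

Lemma sum_two (F : 'I_k -> R) i j : i != j ->
  \sum_l F l = F i + F j + \sum_(l | (l != i) && (l != j)) F l.
Proof.
move=> hij; rewrite (bigD1 i) //= (bigD1 j) /=; last by rewrite eq_sym.
by rewrite addrA.
Qed.

Lemma rot_sum (F : 'rV[R]_n -> R) u i j c s : i != j ->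
  (forall p q, F (c *: p + s *: q) + F (- s *: p + c *: q) = F p + F q) ->
  \sum_l F (rot u i j c s l) = \sum_l F (u l).
Proof.
move=> hij hF; rewrite [LHS](@sum_two _ i j hij) [RHS](@sum_two _ i j hij) /rot eqxx [j == i]eq_sym (negbTE hij) eqxx hF.
congr (_ + _); apply: eq_bigr => l /andP [/negbTE -> /negbTE ->] //.
Qed.

Lemma rot_frame u A i j c s : i != j -> c ^+ 2 + s ^+ 2 = 1 ->
  frameA u A -> frameA (rot u i j c s) A.
Proof.
move=> hij hcs hu x; rewrite -hu.
apply: (rot_sum (fun p => dotv x p ^+ 2)) => // p q.
rewrite !dotv_lin.
have -> : (c * dotv x p + s * dotv x q) ^+ 2 + (- s * dotv x p + c * dotv x q) ^+ 2
  = (c ^+ 2 + s ^+ 2) * (dotv x p ^+ 2 + dotv x q ^+ 2) by ring.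
by rewrite hcs mul1r.
Qed.

Variable m : R.

Lemma balance N : forall u A, frameA u A ->
  (#|[set l | Qf (u l) (u l) != m]| <= N)%N ->
  \sum_l (Qf (u l) (u l) - m) = 0 ->
  exists u', frameA u' A /\ forall l, Qf (u' l) (u' l) = m.
Proof.
elim: N => [|N IH] u A hu hN hs.
  exists u; split => // l; apply/eqP; apply: contraTT hN => hl.
  rewrite -ltnNge; apply/card_gt0P; exists l; by rewrite inE.
case: (boolP [exists l, Qf (u l) (u l) != m]); last first.
  move/existsPn => h; exists u; split => // l; apply/eqP; move: (h l); by rewrite negbK.
move/existsP => [i hi].
set q := fun l => Qf (u l) (u l).
have [j hj] : exists j, (q i - m) * (q j - m) < 0.
  case: (boolP [exists j, (q i - m) * (q j - m) < 0]); first by move/existsP.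
  move/existsPn => h; exfalso.
  have hz : \sum_l (q i - m) * (q l - m) = 0 by rewrite -mulr_sumr hs mulr0.
  move: hz; rewrite (bigD1 i) //=.
  have h1 : 0 < (q i - m) * (q i - m).
    by rewrite -expr2 lt_def sqrf_eq0 subr_eq0 hi sqr_ge0.
  have h2 : 0 <= \sum_(l | l != i) (q i - m) * (q l - m).
    by apply: sumr_ge0 => l _; move: (h l); rewrite -leNgt.
  lra.
have hij : i != j.
  apply/eqP => e; move: hj; rewrite -e -expr2 ltNge sqr_ge0 //.
have [c [s [hcs hcsm]]] := @rot_scalar (q i) (Qf (u i) (u j)) (q j) m hj.
set u' := rot u i j c s.
have hsum : forall l, Qf (u' l) (u' l) = if l == i then m else if l == j then
   q i + q j - m else q l.
  move=> l; rewrite /u' /rot; case: (eqVneq l i) => [_|hli].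
    by rewrite Q_quad -hcsm /q; ring.
  case: (eqVneq l j) => [_|hlj] //.
  have e := Q_quad2 c s (u i) (u j); rewrite hcs mul1r in e.
  have e2 := Q_quad c s (u i) (u j).
  move: e e2 hcsm; rewrite /q; lra.
apply: (IH u' A).
- exact: rot_frame.
- rewrite -ltnS; apply: leq_trans hN; apply: proper_card; apply/properP; split.
    apply/subsetP => l; rewrite !inE hsum.
    case: (eqVneq l i) => [_|hli]; first by rewrite eqxx.
    case: (eqVneq l j) => [->|hlj] // _.
    by apply/eqP => e; move: hj; rewrite /q e subrr mulr0 ltxx.
  by exists i; rewrite !inE ?hsum ?eqxx.
- 
  have hF : forall p r, (Qf (c *: p + s *: r) (c *: p + s *: r) - m) +
     (Qf (- s *: p + c *: r) (- s *: p + c *: r) - m) = (Qf p p - m) + (Qf r r - m).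
    move=> p r; have := Q_quad2 c s p r; rewrite hcs mul1r => e.
    rewrite addrACA e; ring.
  exact: (etrans (@rot_sum (fun p => Qf p p - m) u i j c s hij hF) hs).
Qed.

Lemma widen_sum (F : nat -> R) p : (n <= p)%N -> (forall j, (n <= j)%N -> F j = 0) ->
  \sum_(j < p) F j = \sum_(j < n) F j.
Proof.
move=> hnp hF; rewrite -!(big_mkord xpredT) (@big_cat_nat _ _ _ n 0 p _ _ (leq0n n) hnp) /=.
rewrite [X in _ + X]big1_seq ?addr0 // => j /andP [_]; rewrite mem_index_iota => /andP [h _].
exact: hF.
Qed.

Definition ev (j : nat) : 'rV[R]_n := \row_(l < n) (if (l : nat) == j then 1 else 0).

Lemma dotv_ev x (j : 'I_n) : dotv x (ev j) = x 0 j.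
Proof.
rewrite /dotv (bigD1 j) //= big1 ?addr0; first by rewrite !mxE eqxx mulr1.
move=> l hl; rewrite !mxE; case: eqP => [e|]; last by rewrite mulr0.
by move: hl; rewrite (val_inj e) eqxx.
Qed.

Lemma dotv_ev0 x (j : nat) : (n <= j)%N -> dotv x (ev j) = 0.
Proof.
move=> hj; rewrite /dotv big1 // => l _; rewrite !mxE; case: eqP => [e|]; last by rewrite mulr0.
by move: (ltn_ord l); rewrite e ltnNge hj.
Qed.

Lemma Q_ev (j : 'I_n) : Qf (ev j) (ev j) = a j.
Proof.
rewrite /Qf (bigD1 j) //= big1 ?addr0; first by rewrite !mxE eqxx !mulr1.
move=> l hl; rewrite !mxE; case: eqP => [e|]; last by rewrite mul0r mulr0.
by move: hl; rewrite (val_inj e) eqxx.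
Qed.

Lemma Q_ev0 (j : nat) : (n <= j)%N -> Qf (ev j) (ev j) = 0.
Proof.
move=> hj; rewrite /Qf big1 // => l _; rewrite !mxE; case: eqP => [e|]; last by rewrite mul0r mulr0.
by move: (ltn_ord l); rewrite e ltnNge hj.
Qed.

End Aux.
Arguments ev {R n}.
Arguments Qf {R n}.
Arguments frameA {R n k}.
Arguments widen_sum {R n}. Arguments dotv_ev {R n}. Arguments dotv_ev0 {R n}. Arguments Q_ev {R n}. Arguments Q_ev0 {R n}.

Unset Implicit Arguments.
Theorem theorem1 (R : realType) (n k : nat) (a : 'I_n -> R)
  (hnk : (n <= k)%N)
  (ha : forall j, 0 <= a j)
  (hr : 0 < \sum_(j < n) a j) :
  exists u : 'I_k -> 'rV[R]_n,
    (forall j, ellipsoid a (u j)) /\ tight_frame u.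
Proof.
set r := \sum_(j < n) a j.
have hn : (0 < n)%N.
  case: n a ha hr hnk @r => // a' _; rewrite big_ord0 ltxx //.
have hk : (0 < k)%N by apply: leq_trans hn hnk.
set m := r / k%:R.
have hkR : (0 : R) < k%:R by rewrite ltr0n.
have hm : 0 < m by rewrite /m divr_gt0.
set u0 : 'I_k -> 'rV[R]_n := fun j => ev (val j).
have hu0 : frameA u0 1.
  move=> x; rewrite mul1r.
  rewrite (widen_sum (fun j => dotv x (ev j) ^+ 2) k hnk); last first.
    by move=> j hj; rewrite dotv_ev0 // expr0n.
  by rewrite [RHS]/dotv; apply: eq_bigr => j _; rewrite dotv_ev expr2.
have hs0 : \sum_l (Qf a (u0 l) (u0 l) - m) = 0.
  rewrite big_split /= sumr_const card_ord.
  rewrite (widen_sum (fun j => Qf a (ev j) (ev j)) k hnk); last first.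
    by move=> j hj; rewrite Q_ev0.
  have -> : \sum_(j < n) Qf a (ev j) (ev j) = r.
    by apply: eq_bigr => j _; rewrite Q_ev.
  by rewrite -mulr_natr mulNr /m divfK ?subrr // gt_eqF.
have [u' [hu' hq]] := balance a m _ hu0 (max_card _) hs0.
set lam := (Num.sqrt m)^-1.
have hsq : Num.sqrt m ^+ 2 = m by rewrite sqr_sqrtr // ltW.
have hsq0 : Num.sqrt m != 0 by rewrite sqrtr_eq0 -ltNge.
have hlam : lam ^+ 2 * m = 1 by rewrite /lam exprVn hsq mulVf // gt_eqF.
exists (fun j => lam *: u' j); split.
  move=> j; rewrite /ellipsoid -[RHS]hlam -(hq j) /Qf mulr_sumr; apply: eq_bigr => l _.
  rewrite !mxE; ring.
exists (lam ^+ 2); split; first by rewrite exprn_gt0 // invr_gt0 sqrtr_gt0.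
split => // x.
have -> : \sum_(j < k) `|dotv x (lam *: u' j)| ^+ 2 = lam ^+ 2 * dotv x x.
  rewrite -[dotv x x]mul1r -(hu' x) mulr_sumr; apply: eq_bigr => j _.
  rewrite real_normK ?num_real //.
  have -> : lam *: u' j = lam *: u' j + 0 *: u' j by rewrite scale0r addr0.
  rewrite dotv_lin; ring.
by rewrite lexx.
Qed.
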